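(* Let $\Sigma\in\mathcal{G}_n$ and $Q\in\mathcal{Q}(\Sigma)$ with level $\ell$, and let $p$ be a prime divisor of $\ell$. Then there exists an integral vector $z\not\equiv 0\pmod p$ such that $W(\Sigma)^{\rm T}z\equiv 0\pmod p$.
   Context: An oriented graph on vertices $v_1,\dots,v_n$ is a simple graph with each edge directed; its skew-adjacency matrix $S(\Sigma)=(s_{ij})$ has $s_{ij}=1$ if $(v_i,v_j)$ is an arc, $-1$ if $(v_j,v_i)$ is an arc, $0$ otherwise. Two oriented graphs are generalized cospectral if their skew-adjacency matrices $S$ have the same spectrum and the matrices $J-I-S$ have the same spectrum. With $e$ the all-one vector, $W(\Sigma)=[e,Se,\dots,S^{n-1}e]$, $S=S(\Sigma)$. $\mathcal{G}_n$ is the set of $n$-vertex oriented graphs with $2^{-\lfloor n/2\rfloor}\det W(\Sigma)$ an odd square-free integer. A rational orthogonal matrix $Q$ is regular if $Qe=e$; its level is the least positive integer $k$ with $kQ$ integral. $\mathcal{Q}(\Sigma)$ is the set of regular rational orthogonal $Q$ with $Q^{\rm T}S(\Sigma)Q=S(\Delta)$ for some oriented graph $\Delta$ generalized cospectral with $\Sigma$. *)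

(* Defs.v *)
From HB Require Import structures.
From mathcomp Require Import all_boot all_order all_algebra.
Set Implicit Arguments. Unset Strict Implicit. Unset Printing Implicit Defensive.
Import Order.TTheory GRing.Theory Num.Theory.
Local Open Scope ring_scope.

Definition oriented_graph (n : nat) (a : rel 'I_n) : Prop :=
  (forall i, ~~ a i i) /\ (forall i j, ~~ (a i j && a j i)).

Definition skewadj (n : nat) (a : rel 'I_n) : 'M[int]_n :=
  \matrix_(i, j) ((a i j)%:Z - (a j i)%:Z).

Definition onev (n : nat) : 'cV[int]_n := const_mx 1.
Definition Jmx (n : nat) : 'M[int]_n := const_mx 1.

(* same spectrum = same characteristic polynomial (eigenvalues with multiplicity) *)
Definition gen_cospectral (n : nat) (a b : rel 'I_n) : Prop :=
  char_poly (skewadj a) = char_poly (skewadj b) /\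
  char_poly (Jmx n - 1%:M - skewadj a) = char_poly (Jmx n - 1%:M - skewadj b).

Definition mxpow (n : nat) (A : 'M[int]_n) (k : nat) : 'M[int]_n :=
  iter k (mulmx A) 1%:M.

Definition walkmx (n : nat) (a : rel 'I_n) : 'M[int]_n :=
  \matrix_(i, j) ((mxpow (skewadj a) j *m onev n) i 0).

Definition squarefree_int (m : int) : Prop :=
  forall k : nat, (1 < k)%N -> ~~ (k ^ 2 %| `|m|)%N.

Definition in_Gn (n : nat) (a : rel 'I_n) : Prop :=
  oriented_graph a /\
  exists m : int, \det (walkmx a) = (2 ^ (n./2))%:Z * m /\
                  ~~ (2 %| m)%Z /\ squarefree_int m.

Definition int_mx (m n : nat) (A : 'M[rat]_(m, n)) : Prop :=
  forall i j, A i j \is a Num.int.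

Definition regular_rat_orth (n : nat) (Q : 'M[rat]_n) : Prop :=
  Q^T *m Q = 1%:M /\ Q *m const_mx 1 = (const_mx 1 : 'cV[rat]_n).

Definition is_level (n : nat) (Q : 'M[rat]_n) (l : nat) : Prop :=
  (0 < l)%N /\ int_mx (l%:R *: Q) /\
  forall k : nat, (0 < k)%N -> (k < l)%N -> ~ int_mx (k%:R *: Q).

Definition in_QSigma (n : nat) (a : rel 'I_n) (Q : 'M[rat]_n) : Prop :=
  regular_rat_orth Q /\
  exists b : rel 'I_n, oriented_graph b /\ gen_cospectral a b /\
    Q^T *m map_mx intr (skewadj a) *m Q = map_mx intr (skewadj b).

(* Main.v *)
Require Import Defs.
From HB Require Import structures.
From mathcomp Require Import all_boot all_order all_algebra.
Import Order.TTheory GRing.Theory Num.Theory.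
Local Open Scope ring_scope.

Lemma iter_map (n : nat) (A : 'M[int]_n) k :
  map_mx (intr : int -> rat) (mxpow A k) = iter k (mulmx (map_mx intr A)) 1%:M.
Proof.
elim: k => [|k IH] /=; first by rewrite /mxpow /= map_mx1.
by rewrite /mxpow /= map_mxM -IH.
Qed.

Lemma colW (n : nat) (c : rel 'I_n) j k :
  (intr (walkmx c k j) : rat) =
  (iter j (mulmx (map_mx intr (skewadj c))) 1%:M *m (const_mx 1 : 'cV[rat]_n)) k 0.
Proof.
transitivity ((map_mx (intr : int -> rat) (mxpow (skewadj c) j *m onev n)) k 0).
  by rewrite !mxE.
by rewrite map_mxM iter_map /onev map_const_mx rmorph1.
Qed.

Theorem lemma3p2 (n : nat) (a : rel 'I_n) (Q : 'M[rat]_n) (l p : nat) :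
  in_Gn a -> in_QSigma a Q -> is_level Q l -> prime p -> (p %| l)%N ->
  exists z : 'cV[int]_n,
    (exists i, ~~ (p%:Z %| z i ord0)%Z) /\
    (forall j, (p%:Z %| ((walkmx a)^T *m z) j ord0)%Z).
Proof.
move=> _ [[QQ Qe] [b [_ [_ HS]]]] [l0 [lint lmin]] pp pl.
set S := map_mx (intr : int -> rat) (skewadj a) in HS.
set S' := map_mx (intr : int -> rat) (skewadj b) in HS.
have QQt : Q *m Q^T = 1%:M by apply: mulmx1C.
have Qte : Q^T *m const_mx 1 = (const_mx 1 : 'cV[rat]_n).
  by rewrite -{1}Qe mulmxA QQ mul1mx.
have QS : Q^T *m S = S' *m Q^T by rewrite -HS -!mulmxA QQt mulmx1.
have key : forall k, Q^T *m (iter k (mulmx S) 1%:M *m (const_mx 1 : 'cV[rat]_n))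
                    = iter k (mulmx S') 1%:M *m (const_mx 1 : 'cV[rat]_n).
  elim=> [|k IH] /=; first by rewrite !mul1mx.
  by rewrite -!mulmxA (mulmxA Q^T) QS -mulmxA IH.
have W : Q^T *m map_mx intr (walkmx a) = map_mx (intr : int -> rat) (walkmx b).
  apply/matrixP => i j; rewrite [RHS]mxE colW -/S' -key !mxE.
  by apply: eq_bigr => k _; congr (_ * _); rewrite mxE; exact: colW.
have [Z ZE] : exists Z : 'M[int]_n, map_mx intr Z = l%:R *: Q.
  exists (\matrix_(i, j) Num.floor ((l%:R *: Q) i j)).
  by apply/matrixP => i j; rewrite !mxE floorK //; move: (lint i j); rewrite mxE.
have EQ : map_mx (intr : int -> rat) ((walkmx a)^T *m Z)
          = map_mx intr ((l%:Z) *: (walkmx b)^T).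
  rewrite map_mxM ZE -map_trmx -scalemxAr -(trmxK Q) -trmx_mul W map_mxZ -map_trmx.
  by [].
have WZ : (walkmx a)^T *m Z = (l%:Z) *: (walkmx b)^T.
  apply/matrixP => i j; apply: (@intr_inj rat).
  move/matrixP: EQ => /(_ i j).
  by rewrite [in LHS]mxE [in RHS]mxE.
case: (boolP [exists i, exists j, ~~ (p%:Z %| Z i j)%Z]).
  move=> /existsP [i /existsP [j Hij]].
  exists (col j Z); split; first by exists i; rewrite mxE.
  move=> k.
  have -> : ((walkmx a)^T *m col j Z) k ord0 = ((walkmx a)^T *m Z) k j.
    by rewrite !mxE; apply: eq_bigr => x _; rewrite !mxE.
  rewrite WZ mxE; apply: dvdz_mulr; exact: pl.
move=> H; exfalso.
have Hall : forall i j, (p%:Z %| Z i j)%Z.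
  move=> i j; apply/negPn; apply: contraNN H => h.
  by apply/existsP; exists i; apply/existsP; exists j.
have p1 := prime_gt1 pp.
move: pl => /dvdnP [k lk].
have k0 : (0 < k)%N by move: l0; rewrite lk muln_gt0 => /andP [].
apply: (lmin k k0); first by rewrite lk ltn_Pmulr.
move=> i j; have/dvdzP [m hm] := Hall i j.
apply/intrP; exists m.
move/matrixP: ZE => /(_ i j); rewrite !mxE hm lk => h.
have pn0 : (p%:R : rat) != 0 by rewrite pnatr_eq0 -lt0n ltnW.
apply: (mulIf pn0).
rewrite mulrAC -natrM -h intrM.
by [].
Qed.
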